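(* Let $G$ be a finite group of order $n$ and let $S$ be a multiset of elements of $G\setminus\{1\}$ that is inverse-closed ($m_S(x)=m_S(x^{-1})$ for all $x$) and normal ($m_S(gxg^{-1})=m_S(x)$ for all $g,x\in G$). Let $\Gamma=\operatorname{Cay}(G,S)$ be the Cayley multigraph and $H^*=\{h\in\mathbb{Z}_n^*\mid S^h=S\text{ as multisets}\}$. Then $$\mathbb{SF}(\Gamma)=\mathbb{Q}(\zeta_n)^{\eta^{-1}(H^* )}=\{x\in\mathbb{Q}(\zeta_n)\mid\sigma(x)=x\text{ for all }\sigma\in\eta^{-1}(H^* )\},\qquad \operatorname{Deg}(\Gamma)=\frac{\varphi(n)}{|H^*|}.$$
   Context: $m_S(x)$ is the multiplicity of $x$ in $S$. The Cayley multigraph $\operatorname{Cay}(G,S)$ has vertex set $G$ and adjacency matrix with $(x,y)$-entry $m_S(xy^{-1})$. $S^h$ is the multiset $\{s^h\mid s\in S\}$. $\zeta_n=e^{2\pi i/n}$; $\eta:\operatorname{Gal}(\mathbb{Q}(\zeta_n)/\mathbb{Q})\to\mathbb{Z}_n^*$ is the isomorphism with $\sigma(\zeta_n)=\zeta_n^{\eta(\sigma)}$. $\mathbb{SF}(\Gamma)$ is the smallest subfield of $\mathbb{C}$ containing all adjacency eigenvalues and $\operatorname{Deg}(\Gamma)=[\mathbb{SF}(\Gamma):\mathbb{Q}]$; $\varphi$ is Euler's totient. *)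

(* Defs.v *)
From HB Require Import structures.
From mathcomp Require Import all_boot all_order all_algebra all_fingroup all_field.
Set Implicit Arguments. Unset Strict Implicit. Unset Printing Implicit Defensive.
Import GRing.Theory Num.Theory.
Local Open Scope ring_scope.

(* Multisets of group elements are represented by sequences; the
   multiplicity m_S(x) is [count_mem x S]. *)

Definition cayley_adj (gT : finGroupType) (S : seq gT) : 'M[algC]_#|gT| :=
  \matrix_(i, j) (count_mem (enum_val i * (enum_val j)^-1)%g S)%:R.

Definition is_subfield (K : algC -> Prop) : Prop :=
  [/\ K 0, K 1,
      (forall x y, K x -> K y -> K (x + y)),
      (forall x, K x -> K (- x)) &
      (forall x y, K x -> K y -> K (x * y)) /\
      (forall x, K x -> x != 0 -> K x^-1)].

Definition gen_field (P : algC -> Prop) : algC -> Prop :=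
  fun x => forall K, is_subfield K -> (forall y, P y -> K y) -> K x.

Definition spec_field (n : nat) (A : 'M[algC]_n) : algC -> Prop :=
  gen_field (fun l => eigenvalue A l).

(* [K : Q] = d : K has a Q-basis of size d. *)
Definition Qdim (K : algC -> Prop) (d : nat) : Prop :=
  exists b : 'I_d -> algC,
    [/\ (forall i, K (b i)),
        (forall c : 'I_d -> rat,
            \sum_i ratr (c i) * b i = 0 -> forall i, c i = 0) &
        (forall x, K x -> exists c : 'I_d -> rat, x = \sum_i ratr (c i) * b i)].

Definition Hstar (gT : finGroupType) (S : seq gT) : {set 'I_#|gT|} :=
  [set h : 'I_#|gT| | coprime h #|gT| && perm_eq [seq (x ^+ h)%g | x <- S] S].

(* Main.v *)
Require Import Defs.
From HB Require Import structures.
From mathcomp Require Import all_boot all_order all_algebra all_fingroup all_field.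
From mathcomp Require Import all_solvable all_character.
Set Implicit Arguments. Unset Strict Implicit. Unset Printing Implicit Defensive.
Import GRing.Theory Num.Theory.
Local Open Scope ring_scope.
Section Part1.
Variables (gT : finGroupType) (S : seq gT).
Hypothesis nS : forall g x : gT, count_mem (x ^ g)%g S = count_mem x S.
Local Notation G := [set: gT]%G.
Definition mS (x : gT) : algC := (count_mem x S)%:R.

Lemma mS_class : is_class_fun <<[set: gT]>>%g [ffun x => mS x].
Proof.
apply: intro_class_fun => [x y _ _|x]; first by rewrite /mS nS.
by rewrite mem_gen ?inE.
Qed.

Definition mcf : 'CF(G) := Cfun 0 mS_class.
Lemma mcfE x : mcf x = mS x. Proof. exact: cfunE. Qed.

Definition lam (i : Iirr G) : algC := '[mcf, 'chi_i] * #|G|%:R / 'chi_i 1%g.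

Lemma orth_conv (i j : Iirr G) (g : gT) :
  \sum_t 'chi_j t * 'chi_i (g * t^-1)%g = (i == j)%:R * #|G|%:R * ('chi_i g / 'chi_i 1%g).
Proof.
have E : \sum_t 'chi_j t * 'chi_i (g * t^-1)%g = \sum_(x in G) 'chi_i (x * g)%g * 'chi_j x^-1%g.
  rewrite (reindex_inj invg_inj) /=; apply: eq_big => [t|t _]; first by rewrite !inE.
  rewrite invgK mulrC; congr (_ * _).
  have -> : (g * t = (t * g) ^ t)%g by rewrite conjgE !mulgA mulVg mul1g.
  by rewrite cfunJ ?inE.
have := generalized_orthogonality_relation g i j.
move/(congr1 (fun x => #|G|%:R * x)); rewrite mulrA mulfV ?neq0CG // mul1r -E => ->.
by rewrite mulrCA mulrA.
Qed.

Lemma conv (i : Iirr G) (g : gT) :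
  \sum_t mS t * 'chi_i (g * t^-1)%g = lam i * 'chi_i g.
Proof.
transitivity (\sum_t \sum_j '[mcf, 'chi_j] * ('chi_j t * 'chi_i (g * t^-1)%g)).
  apply: eq_bigr => t _; rewrite -mcfE {1}[mcf]cfun_sum_cfdot sum_cfunE mulr_suml.
  by apply: eq_bigr => j _; rewrite cfunE mulrA.
rewrite exchange_big /=.
under eq_bigr do rewrite -mulr_sumr orth_conv.
rewrite (bigD1 i) //= big1 ?addr0 => [|j nji]; last first.
  by rewrite eq_sym (negbTE nji) !mul0r mulr0.
rewrite eqxx mul1r /lam.
by rewrite !mulrA mulrAC [_ / _ * _]mulrAC.
Qed.

Lemma sum_ev (F : gT -> algC) : \sum_(c < #|gT|) F (enum_val c) = \sum_x F x.
Proof.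
symmetry; rewrite (reindex (@enum_val gT predT)) //=; exists enum_rank => x _.
  exact: enum_valK. exact: enum_rankK.
Qed.

Definition Emx (i : Iirr G) : 'M[algC]_#|gT| :=
  \matrix_(a, b) 'chi_i (enum_val a * (enum_val b)^-1)%g.

Lemma EA i : Emx i *m cayley_adj S = lam i *: Emx i.
Proof.
apply/matrixP => a b; rewrite !mxE.
under eq_bigr do rewrite !mxE.
rewrite (sum_ev (fun u => 'chi_i (enum_val a * u^-1)%g * (count_mem (u * (enum_val b)^-1)%g S)%:R)).
rewrite (reindex_inj (mulIg (enum_val b))) /=.
rewrite -conv; apply: eq_bigr => t _.
by rewrite mulgK invMg mulgA mulrC.
Qed.

Lemma AE i : cayley_adj S *m Emx i = lam i *: Emx i.
Proof.
apply/matrixP => a b; rewrite !mxE.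
under eq_bigr do rewrite !mxE.
rewrite (sum_ev (fun u => (count_mem (enum_val a * u^-1)%g S)%:R * 'chi_i (u * (enum_val b)^-1)%g)).
rewrite (reindex_inj (inj_comp (mulIg (enum_val a)) invg_inj)) /=.
rewrite -conv; apply: eq_bigr => t _.
rewrite invMg invgK mulgA mulgV mul1g; congr (_ * _).
set g := (enum_val a * (enum_val b)^-1)%g.
have -> : (g * t^-1 = (t^-1 * g) ^ t^-1)%g by rewrite conjgE invgK !mulgA mulgV mul1g.
by rewrite cfunJ ?inE // mulgA.
Qed.

Lemma sumE : \sum_i 'chi_i 1%g *: Emx i = #|gT|%:R *: 1%:M.
Proof.
apply/matrixP => a b; rewrite summxE !mxE.
under eq_bigr do rewrite !mxE.
have := second_orthogonality_relation (G:=G) (enum_val a * (enum_val b)^-1)%g (group1 G).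
rewrite (eq_bigr (fun i => 'chi[G]_i 1%g * 'chi_i (enum_val a * (enum_val b)^-1)%g)) => [->|i _].
  2: by rewrite conj_natr ?Cnat_irr1 // mulrC. rewrite class1G inE divg_eq1 (inj_eq enum_val_inj).
case: eqP => [->|_]; last by rewrite mulr0.
by rewrite mulgV /= cent11T setIT mulr1 cardsT.
Qed.

Lemma eig_iff mu : eigenvalue (cayley_adj S) mu <-> exists i, mu = lam i.
Proof.
split.
  case/eigenvalueP => v vA nzv.
  have : v *m (\sum_i 'chi_i 1%g *: Emx i) != 0.
    rewrite sumE -scalemxAr mulmx1 scaler_eq0 negb_or nzv andbT pnatr_eq0 -lt0n.
    by apply/card_gt0P; exists 1%g.
  rewrite mulmx_sumr => nz.
  have /existsP[i nzi] : [exists i, v *m Emx i != 0].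
    apply: contraR nz => /existsPn Hall; apply/eqP; rewrite big1 // => i _.
    by rewrite -scalemxAr (eqP (negPn (Hall i))) scaler0.
  exists i; apply/eqP; rewrite -subr_eq0; apply/eqP.
  have : (v *m cayley_adj S) *m Emx i = lam i *: (v *m Emx i) by rewrite -mulmxA AE scalemxAr.
  rewrite vA -scalemxAl => /eqP.
  by rewrite -subr_eq0 -scalerBl scaler_eq0 (negbTE nzi) orbF => /eqP.
move=> [i ->]; apply/eigenvalueP.
exists (row (enum_rank (1%g : gT)) (Emx i)).
  by rewrite -row_mul EA !rowE scalemxAr.
apply/eqP => /rowP /(_ (enum_rank (1%g : gT))); rewrite !mxE mulgV.
by apply/eqP; exact: irr1_neq0.
Qed.
End Part1.

Section Part3.
Variable gT : finGroupType.
Local Notation G := [set: gT]%G.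

Lemma aut_chi (u : {rmorphism algC -> algC}) h :
  (forall e, e ^+ #|gT| = 1 -> u e = e ^+ h) ->
  forall (i : Iirr G) g, u ('chi_i g) = 'chi_i (g ^+ h)%g.
Proof.
move=> hu i g.
have sub : <[g]>%g \subset G by apply: subsetT.
rewrite -(cfResE _ sub (cycle_id g)) -(cfResE _ sub (mem_cycle g h)).
have [r ->] := char_sum_irr (cfRes_char <[g]>%G (irr_char i)).
rewrite !sum_cfunE rmorph_sum; apply: eq_bigr => j _.
have lin := irr_cyclic_lin j (cycle_cyclic g).
rewrite lin_charX ?cycle_id //; apply: hu.
have /dvdnP[q ->] : (#[g]%g %| #|gT|)%N by rewrite -cardsT order_dvdG ?inE.
by rewrite mulnC exprM lin_char_unity_root ?cycle_id ?expr1n.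
Qed.

Lemma cnt_sum (T : eqType) (P : pred T) (s : seq T) :
  (count P s)%:R = \sum_(y <- s) (P y)%:R :> algC.
Proof. by elim: s => [|y s IH]; rewrite ?big_nil ?big_cons //= natrD IH. Qed.

Lemma sum_count (s : seq gT) (F : gT -> algC) :
  \sum_(y <- s) F y = \sum_t (count_mem t s)%:R * F t.
Proof.
elim: s => [|y s IH]; first by rewrite big_nil big1 // => t _; rewrite mul0r.
rewrite big_cons IH /=.
under [RHS]eq_bigr do rewrite natrD mulrDl.
rewrite big_split /=; congr (_ + _).
rewrite (bigD1 y) //= eqxx mul1r big1 ?addr0 // => t nty.
by rewrite eq_sym (negbTE nty) mul0r.
Qed.

Definition L0 (s : seq gT) (i : Iirr G) := \sum_(y <- s) 'chi_i (y^-1)%g.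

Lemma lam_eq (S : seq gT) (nS : forall g x : gT, count_mem (x ^ g)%g S = count_mem x S) i : lam nS i = L0 S i / 'chi_i 1%g.
Proof.
have := conv nS i 1%g; under eq_bigr do rewrite mul1g.
rewrite /L0 sum_count => ->; rewrite mulfK ?irr1_neq0 //.
Qed.

Lemma u_L0 (u : {rmorphism algC -> algC}) h :
  (forall e, e ^+ #|gT| = 1 -> u e = e ^+ h) ->
  forall s i, u (L0 s i) = L0 [seq (x ^+ h)%g | x <- s] i.
Proof.
move=> hu s i; rewrite /L0 rmorph_sum big_map; apply: eq_bigr => y _.
by rewrite (aut_chi hu) expVgn.
Qed.

Lemma count_map_sum (s : seq gT) (f : gT -> gT) x :
  (count_mem x (map f s))%:R = \sum_t (count_mem t s)%:R * (f t == x)%:R :> algC.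
Proof. by rewrite cnt_sum big_map sum_count. Qed.

Lemma map_normal (S : seq gT) h :
  (forall g x : gT, count_mem (x ^ g)%g S = count_mem x S) ->
  forall g x : gT, count_mem (x ^ g)%g [seq (y ^+ h)%g | y <- S] =
                   count_mem x [seq (y ^+ h)%g | y <- S].
Proof.
move=> nS g x; apply/eqP; rewrite -(eqr_nat algC) !count_map_sum; apply/eqP.
rewrite (reindex_inj (conjg_inj g)) /=; apply: eq_bigr => t _.
by rewrite nS -conjXg (inj_eq (conjg_inj g)).
Qed.

Lemma L0_perm (S S' : seq gT) :
  (forall g x : gT, count_mem (x ^ g)%g S = count_mem x S) ->
  (forall g x : gT, count_mem (x ^ g)%g S' = count_mem x S') ->
  (forall i, L0 S' i = L0 S i) -> perm_eq S' S.
Proof.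
move=> nS nS' eqL.
have D0 : mcf nS' - mcf nS = 0.
  rewrite [LHS]cfun_sum_cfdot big1 // => i _.
  rewrite cfdotE.
  under eq_bigr do rewrite !cfunE /mS -irr_inv mulrBl.
  rewrite sumrB (eq_bigl (fun _ => true)) => [|x]; last by rewrite inE.
  have := eqL i; rewrite /L0 (sum_count S') (sum_count S) => ->.
  rewrite [X in _ - X](eq_bigl (fun _ => true)) => [|x]; last by rewrite inE.
  by rewrite subrr mulr0 scale0r.
apply/allP => x _; apply/eqP.
have := congr1 (fun f : 'CF(G) => f x) D0.
rewrite !cfunE /mS => /eqP; rewrite subr_eq0 eqr_nat.
by move/eqP.
Qed.
End Part3.

Lemma u_lam (gT : finGroupType) (S : seq gT)
  (nS : forall g x : gT, count_mem (x ^ g)%g S = count_mem x S)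
  (u : {rmorphism algC -> algC}) h :
  (forall e, e ^+ #|gT| = 1 -> u e = e ^+ h) ->
  (forall i, u (lam nS i) = lam nS i) <-> perm_eq [seq (x ^+ h)%g | x <- S] S.
Proof.
move=> hu.
have E i : u (lam nS i) = L0 [seq (x ^+ h)%g | x <- S] i / 'chi_i 1%g.
  by rewrite lam_eq fmorph_div (u_L0 hu) (aut_chi hu) expg1n.
split => [H|P i]; last by rewrite E lam_eq /L0 (perm_big _ P).
apply: L0_perm => //; first exact: map_normal.
move=> i; have := H i; rewrite E lam_eq => /(mulIf (invr_neq0 (irr1_neq0 i))).
done.
Qed.

Section SF.
Variable K : algC -> Prop.
Hypothesis sK : is_subfield K.
Lemma sf0 : K 0. Proof. by case: sK. Qed.
Lemma sf1 : K 1. Proof. by case: sK. Qed.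
Lemma sfD x y : K x -> K y -> K (x + y). Proof. by case: sK => _ _ H _ _; apply: H. Qed.
Lemma sfN x : K x -> K (- x). Proof. by case: sK => _ _ _ H _; apply: H. Qed.
Lemma sfM x y : K x -> K y -> K (x * y). Proof. by case: sK => _ _ _ _ [H _]; apply: H. Qed.
Lemma sfV x : K x -> K x^-1.
Proof.
case: sK => _ _ _ _ [_ H] Kx; have [->|nz] := eqVneq x 0; last exact: H.
by rewrite invr0; apply: sf0.
Qed.
Lemma sfB x y : K x -> K y -> K (x - y). Proof. by move=> ? ?; apply: sfD => //; apply: sfN. Qed.
Lemma sfdiv x y : K x -> K y -> K (x / y). Proof. by move=> ? ?; apply: sfM => //; apply: sfV. Qed.
Lemma sfX x k : K x -> K (x ^+ k).
Proof. by move=> Kx; elim: k => [|k IH]; [rewrite expr0; apply: sf1|rewrite exprS; apply: sfM]. Qed.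
Lemma sf_nat k : K k%:R.
Proof. by elim: k => [|k IH]; [apply: sf0|rewrite -addn1 natrD; apply: sfD => //; apply: sf1]. Qed.
Lemma sf_int (z : int) : K z%:~R.
Proof. by case: z => k; rewrite ?NegzE ?mulrNz; [apply: sf_nat|apply: sfN; apply: sf_nat]. Qed.
Lemma sf_rat q : K (ratr q).
Proof. by rewrite /ratr; apply: sfdiv; apply: sf_int. Qed.
Lemma sf_sum (I : eqType) (r : seq I) (F : I -> algC) :
  (forall i, i \in r -> K (F i)) -> K (\sum_(i <- r) F i).
Proof.
elim: r => [|a r IH] H; first by rewrite big_nil; apply: sf0.
rewrite big_cons; apply: sfD; first by apply: H; rewrite mem_head.
apply: IH => i ir; apply: H.
by rewrite in_cons ir orbT.
Qed.
End SF.

Lemma gen_field_sub P : is_subfield (gen_field P).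
Proof.
split => [K sK _|K sK _|x y Hx Hy K sK HP|x Hx K sK HP|].
- exact: sf0.
- exact: sf1.
- by apply: sfD => //; [apply: Hx|apply: Hy].
- by apply: sfN => //; apply: Hx.
split => [x y Hx Hy K sK HP|x Hx _ K sK HP].
- by apply: sfM => //; [apply: Hx|apply: Hy].
- by apply: sfV => //; apply: Hx.
Qed.

Lemma gen_field_in (P : algC -> Prop) y : P y -> gen_field P y.
Proof. by move=> Py K _ HP; apply: HP. Qed.
Section Galois.
Variables (gT : finGroupType) (S : seq gT) (z : algC).
Hypothesis nS : forall g x : gT, count_mem (x ^ g)%g S = count_mem x S.
Local Notation n := #|gT|.
Local Notation G := [set: gT]%G.
Hypothesis prim_z : n.-primitive_root z.
Variables (Qn : splittingFieldType rat) (QnC : {rmorphism Qn -> algC}) (w : Qn).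
Hypothesis galQn : galois 1 {:Qn}.
Hypothesis gQnC : forall nuQn : gal_of {:Qn},
  {nu : {rmorphism algC -> algC} | {morph QnC : a / nuQn a >-> nu a}}.
Hypothesis prim_w : n.-primitive_root w.
Hypothesis genQn : <<1; w>>%VS = fullv.
Hypothesis Qn_g : forall (i : Iirr G) x, {a | QnC a = 'chi_i x}.

Lemma hz (nu : {rmorphism algC -> algC}) h :
  nu z = z ^+ h -> forall e, e ^+ n = 1 -> nu e = e ^+ h.
Proof.
move=> Hnu e /(prim_rootP prim_z) [k ->].
by rewrite rmorphXn Hnu exprAC.
Qed.

Local Notation zeta := (QnC w).
Lemma prim_zeta : n.-primitive_root zeta.
Proof. by rewrite fmorph_primitive_root. Qed.

Lemma z_zeta : exists j, z = zeta ^+ j.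
Proof.
have [j ->] := prim_rootP prim_zeta (prim_expr_order prim_z); by exists j.
Qed.
Lemma zeta_z : exists j, zeta = z ^+ j.
Proof.
have [j ->] := prim_rootP prim_z (prim_expr_order prim_zeta); by exists j.
Qed.

Definition Rimg x := exists a, x = QnC a.
Lemma Rimg_sf : is_subfield Rimg.
Proof.
split.
- by exists 0; rewrite rmorph0.
- by exists 1; rewrite rmorph1.
- by move=> x y [a ->] [b ->]; exists (a + b); rewrite rmorphD.
- by move=> x [a ->]; exists (- a); rewrite rmorphN.
split.
- by move=> x y [a ->] [b ->]; exists (a * b); rewrite rmorphM.
- by move=> x [a ->] _; exists a^-1; rewrite fmorphV.
Qed.

Local Notation Qz := (gen_field (fun y => y = z)).

Lemma Qz_Rimg x : Qz x -> Rimg x.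
Proof.
move=> Hx; apply: Hx; first exact: Rimg_sf.
move=> y ->; have [j ->] := z_zeta; exists (w ^+ j); by rewrite rmorphXn.
Qed.

Lemma Rimg_Qz a : Qz (QnC a).
Proof.
have sQ := gen_field_sub (fun y => y = z).
have Qzeta : Qz zeta.
  have [j ->] := zeta_z; apply: (sfX sQ); exact: gen_field_in.
have : a \in <<1; w>>%VS by rewrite genQn memvf.
case/Fadjoin_polyP => p /polyOverP p1 ->.
rewrite -horner_map horner_coef; apply: (sf_sum sQ) => i _.
apply: (sfM sQ); last exact: (sfX sQ).
rewrite coef_map /=; have /vlineP[c ->] := p1 i; rewrite rmorphZ_num rmorph1 mulr1.
exact: (sf_rat sQ).
Qed.

Lemma lam_img i : exists y, QnC y = lam nS i.
Proof.
have sR := Rimg_sf.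
suff [y ->] : Rimg (lam nS i) by exists y.
rewrite lam_eq; apply: (sfdiv sR); last first.
  by have [a <-] := Qn_g i 1%g; exists a.
apply: (sf_sum sR) => s _; have [a <-] := Qn_g i (s^-1)%g; by exists a.
Qed.

Lemma galw (s : gal_of {:Qn}) : (s w) ^+ n = 1.
Proof. by rewrite -rmorphXn /= prim_expr_order // rmorph1. Qed.


Definition Phi (s : gal_of {:Qn}) : 'I_n := sval (prim_rootP prim_w (galw s)).
Lemma PhiE (s : gal_of {:Qn}) : s w = w ^+ Phi s.
Proof. by rewrite /Phi; case: (prim_rootP _ _). Qed.

Lemma Phi_coprime (s : gal_of {:Qn}) : coprime (Phi s) n.
Proof.
have : n.-primitive_root (s w) by rewrite fmorph_primitive_root.
by rewrite PhiE prim_root_exp_coprime.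
Qed.

Lemma gal_fix1 (s : gal_of {:Qn}) c : c \in (1%VS : {vspace Qn}) -> s c = c.
Proof. by case/vlineP => k ->; rewrite linearZ /= rmorph1. Qed.

Lemma gal_eq_w (s t : gal_of {:Qn}) : s w = t w -> s = t.
Proof.
move=> Hw; apply/eqP/gal_eqP => a _.
have : a \in <<1; w>>%VS by rewrite genQn memvf.
case/Fadjoin_polyP => p p1 ->.
rewrite -!horner_map /= Hw.
rewrite (map_poly_id (p := p)) ?(map_poly_id (p := p)) // => c cp;
  by rewrite gal_fix1 //; apply: (allP p1).
Qed.

Lemma Phi_inj : injective Phi.
Proof. by move=> s t E; apply: gal_eq_w; rewrite !PhiE E. Qed.

Lemma ext_z (s : gal_of {:Qn}) : (sval (gQnC s)) z = z ^+ Phi s.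
Proof.
have Dnu := svalP (gQnC s); set nu := sval _ in Dnu *.
have [j ->] := z_zeta; rewrite rmorphXn -Dnu PhiE rmorphXn exprAC //.
Qed.

Lemma exists_gal (h : 'I_n) : coprime h n ->
  exists s : gal_of {:Qn}, exists nu : {rmorphism algC -> algC},
   [/\ forall e, e ^+ n = 1 -> nu e = e ^+ h,
       forall a, QnC (s a) = nu (QnC a),
       s \in 'Gal({:Qn} / 1)%g & Phi s = h].
Proof.
move=> cop; have [nuC DnuC] := Qn_aut_exists cop.
have [nuQ DnuQ] := restrict_aut_to_normal_num_field QnC nuC.
have hom_nu: kHom 1 {:Qn} (linfun nuQ).
  rewrite k1HomE; apply/ahom_inP.
  by split=> [u v | ]; rewrite !lfunE ?rmorphM ?rmorph1.
have [|s cGs Ds] := kHom_to_gal _ (normalFieldf 1) hom_nu.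
  by rewrite !subvf.
have Ds' a : QnC (s a) = nuC (QnC a) by rewrite -Ds ?memvf // lfunE DnuQ.
exists s, nuC; split => //.
apply: val_inj => /=; apply/eqP.
have : QnC (s w) = QnC (w ^+ h) by rewrite Ds' DnuC ?rmorphXn // prim_expr_order // prim_zeta.
move/fmorph_inj; rewrite PhiE => /eqP; rewrite (eq_prim_root_expr prim_w) !modn_small //.
Qed.

Lemma lam_imgb i : exists y, QnC y == lam nS i.
Proof. by have [y Hy] := lam_img i; exists y; apply/eqP. Qed.
Definition yf i := xchoose (lam_imgb i).
Lemma yfE i : QnC (yf i) = lam nS i.
Proof. exact/eqP/(xchooseP (lam_imgb i)). Qed.
Definition ys := [seq yf i | i <- enum (Iirr G)].
Definition E : {subfield Qn} := <<1 & ys>>%AS.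

Lemma yf_E i : yf i \in E.
Proof. by apply: seqv_sub_adjoin; apply: map_f; rewrite mem_enum. Qed.

Lemma GalE_Hstar (s : gal_of {:Qn}) : s \in 'Gal({:Qn} / E)%g -> Phi s \in Hstar S.
Proof.
move=> sG; rewrite inE Phi_coprime /=.
have Dnu := svalP (gQnC s).
apply: (proj1 (u_lam nS (hz (ext_z s)))) => i.
by rewrite -yfE -Dnu (fixed_gal (subvf E) sG (yf_E i)).
Qed.

Lemma Hstar_GalE h : h \in Hstar S -> exists2 s, s \in 'Gal({:Qn} / E)%g & Phi s = h.
Proof.
rewrite inE => /andP[cop pe].
have [s [nu [hnu Dnu _ Ph]]] := exists_gal cop.
exists s => //.
have : [set s] \subset 'Gal({:Qn} / E)%g.
  rewrite galois_connection ?subvf //; apply/Fadjoin_seqP; split; first exact: sub1v.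
  move=> y /mapP[i _ ->]; apply/fixedFieldP; first exact: memvf.
  move=> x; rewrite inE => /eqP ->; apply: (fmorph_inj QnC).
  by rewrite Dnu yfE; apply: (proj2 (u_lam nS hnu)).
by move/subsetP; apply; rewrite set11.
Qed.

Lemma card_GalE : #|'Gal({:Qn} / E)%g| = #|Hstar S|.
Proof.
rewrite -(card_in_imset (f := Phi)); last by move=> x y _ _; apply: Phi_inj.
apply: eq_card => h; apply/imsetP/idP => [[s sG ->]|hH].
  exact: GalE_Hstar.
by have [s sG <-] := Hstar_GalE hH; exists s.
Qed.

Lemma card_coprime : #|[set h : 'I_n | coprime h n]| = totient n.
Proof.
rewrite totient_count_coprime big_mkord -sum1_card big_mkcond /=.
by apply: eq_bigr => i _; rewrite inE coprime_sym; case: coprime.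
Qed.

Lemma card_Gal1 : #|'Gal({:Qn} / 1)%g| = totient n.
Proof.
rewrite -card_coprime -(card_in_imset (f := Phi)); last by move=> x y _ _; apply: Phi_inj.
apply: eq_card => h; rewrite inE; apply/imsetP/idP => [[s sG ->]|hH].
  exact: Phi_coprime.
by have [s [nu [_ _ sG <-]]] := exists_gal hH; exists s.
Qed.

Lemma dimE : \dim E = (totient n %/ #|Hstar S|)%N.
Proof.
have g1 := galois_dim galQn; rewrite dimv1 divn1 card_Gal1 in g1.
have gE := galois_dim (galoisS (K := 1%AS) (M := E) (E := fullv) _ galQn).
rewrite sub1v subvf /= card_GalE in gE; have {}gE := gE isT.
rewrite -g1 -gE {1}(dim_sup_field (subvf E)) mulKn // gE.
by rewrite -card_GalE card_gt0; apply/set0Pn; exists 1%g; rewrite group1.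
Qed.

Lemma adjoin_ind (P : Qn -> Prop) :
  P 0 -> P 1 -> (forall a b, P a -> P b -> P (a + b)) ->
  (forall a b, P a -> P b -> P (a * b)) ->
  forall (rs : seq Qn) (K : {subfield Qn}), (forall a, a \in K -> P a) ->
  (forall y, y \in rs -> P y) -> forall a, a \in <<K & rs>>%VS -> P a.
Proof.
move=> P0 P1 PD PM; elim => [|y rs IH] K HK Hrs a.
  by rewrite adjoin_nil subfield_closed; apply: HK.
rewrite adjoin_cons => Ha; apply: (IH <<K; y>>%AS) Ha => [b|y' y'rs]; last first.
  by apply: Hrs; rewrite in_cons y'rs orbT.
have Py : P y by apply: Hrs; exact: mem_head.
have PX k : P (y ^+ k).
  by elim: k => [|k IHk]; [rewrite expr0 | rewrite exprS; apply: PM].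
case/Fadjoin_polyP => p /polyOverP pK ->.
rewrite horner_coef; apply: (big_ind P) => // i _.
by apply: PM; first by apply: HK.
Qed.

Local Notation spec := (spec_field (cayley_adj S)).
Definition Tp x := Qz x /\ (forall nu : {rmorphism algC -> algC},
   (exists2 h, h \in Hstar S & nu z = z ^+ h) -> nu x = x).

Lemma Tp_sf : is_subfield Tp.
Proof.
have sQ := gen_field_sub (fun y => y = z).
split.
- by split; [apply: sf0|move=> nu _; rewrite rmorph0].
- by split; [apply: sf1|move=> nu _; rewrite rmorph1].
- move=> x y [Qx Hx] [Qy Hy]; split; first exact: (sfD sQ).
  by move=> nu Hnu; rewrite rmorphD Hx ?Hy.
- move=> x [Qx Hx]; split; first exact: (sfN sQ).
  by move=> nu Hnu; rewrite rmorphN Hx.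
split.
- move=> x y [Qx Hx] [Qy Hy]; split; first exact: (sfM sQ).
  by move=> nu Hnu; rewrite rmorphM Hx ?Hy.
- move=> x [Qx Hx] _; split; first exact: (sfV sQ).
  by move=> nu Hnu; rewrite fmorphV Hx.
Qed.

Lemma lam_spec i : spec (lam nS i).
Proof. by apply: gen_field_in; apply/(eig_iff nS); exists i. Qed.

Lemma E_spec a : a \in E -> spec (QnC a).
Proof.
have sP := gen_field_sub (fun l => eigenvalue (cayley_adj S) l).
pose P b := spec (QnC b).
apply: (adjoin_ind (P := P)).
- by rewrite /P rmorph0; apply: (sf0 sP).
- by rewrite /P rmorph1; apply: (sf1 sP).
- by move=> b c Pb Pc; rewrite /P rmorphD; apply: (sfD sP).
- by move=> b c Pb Pc; rewrite /P rmorphM; apply: (sfM sP).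
- move=> b /vlineP[k ->]; rewrite /P rmorphZ_num rmorph1 mulr1; exact: (sf_rat sP).
- by move=> y /mapP[i _ ->]; rewrite /P yfE; apply: lam_spec.
Qed.

Lemma spec_Tp x : spec x -> Tp x.
Proof.
move=> Hx; apply: Hx; first exact: Tp_sf.
move=> mu /(eig_iff nS)[i ->]; split; first by rewrite -yfE; apply: Rimg_Qz.
move=> nu [h]; rewrite inE => /andP[_ pe] Hnu.
exact: (proj2 (u_lam nS (hz Hnu))).
Qed.

Lemma Tp_E x : Tp x -> exists2 a, a \in E & x = QnC a.
Proof.
move=> [/Qz_Rimg[a ->] Hx]; exists a => //.
have <- : fixedField 'Gal({:Qn} / E)%g = E.
  by apply/galois_fixedField; apply: galoisS galQn; rewrite subvf sub1v.
apply/fixedFieldP; first exact: memvf.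
move=> s sG; apply: (fmorph_inj QnC); rewrite (svalP (gQnC s)).
by apply: Hx; exists (Phi s); [apply: GalE_Hstar | apply: ext_z].
Qed.

Lemma main_sec : (forall x, spec x <-> Tp x) /\
  Qdim spec (totient n %/ #|Hstar S|).
Proof.
split => [x|]; first by split; [apply: spec_Tp | case/Tp_E => a aE ->; apply: E_spec].
rewrite -dimE.
exists (fun i => QnC (vbasis E)`_i); split.
- by move=> i; apply: E_spec; apply: vbasis_mem; apply: mem_nth; rewrite size_tuple.
- move=> c Hc; have /freeP := basis_free (vbasisP E); apply.
  apply: (fmorph_inj QnC); rewrite rmorph0 -Hc rmorph_sum; apply: eq_bigr => i _.
  by rewrite rmorphZ_num.
- move=> x /spec_Tp /Tp_E [a aE ->].
  exists (fun i => coord (vbasis E) i a).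
  rewrite {1}(coord_vbasis aE) rmorph_sum; apply: eq_bigr => i _.
  by rewrite rmorphZ_num.
Qed.
End Galois.

Unset Implicit Arguments.
Theorem mainTheorem11 (gT : finGroupType) (S : seq gT) (z : algC) :
  (forall x, x \in S -> x != 1%g) ->
  (forall x : gT, count_mem x S = count_mem (x^-1)%g S) ->
  (forall g x : gT, count_mem (x ^ g)%g S = count_mem x S) ->
  #|gT|.-primitive_root z ->
  (forall x : algC,
     spec_field (cayley_adj S) x <->
     (gen_field (fun y => y = z) x /\
      forall nu : {rmorphism algC -> algC},
        (exists2 h, h \in Hstar S & nu z = z ^+ h) -> nu x = x))
  /\ Qdim (spec_field (cayley_adj S)) (totient #|gT| %/ #|Hstar S|).
Proof.
move=> _ _ nS prim_z.
have [Qn galQn [QnC gQnC [w [prim_w genQn] Qn_g]]] := group_num_field_exists [set: gT]%G.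
rewrite cardsT in prim_w.
have Qn_g' : forall (i : Iirr [set: gT]%G) x, {a | QnC a = 'chi_i x}.
  by move=> i x; apply: Qn_g; [exact: irr_char | rewrite order_dvdG ?inE].
have [H1 H2] := main_sec nS prim_z galQn gQnC prim_w genQn Qn_g'.
by split => // x; apply: H1.
Qed.
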